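(* Let $A,B,C,D$ be integers with $A>0$ odd and square-free, $B,C>0$, $D=B^2+C^2$ square-free, and $\gcd(A,D)=1$, and let $K=\mathbb{Q}\big(\sqrt{A(D+B\sqrt{D})}\big)$ (a totally real cyclic quartic field). Then \[ \tfrac{1}{48}\, A\sqrt{D} \le M(\mathcal{O}_K). \]
   Context: For a nonconstant polynomial $f(x)=c\prod_{i=1}^d (x-\alpha_i)\in\mathbb{C}[x]$, the Mahler measure is $M(f)=|c|\prod_{|\alpha_i|\ge 1}|\alpha_i|$. For an algebraic number $\alpha$, $M(\alpha)$ is the Mahler measure of its minimal polynomial over $\mathbb{Z}$ (with content $1$). For a number field $K$ with ring of integers $\mathcal{O}_K$, $M(\mathcal{O}_K)=\min\{M(\alpha):\alpha\in\mathcal{O}_K,\ \mathbb{Q}(\alpha)=K\}$. Every cyclic quartic field can be written uniquely as $\mathbb{Q}(\sqrt{A(D+B\sqrt{D})})$ with $A,B,C,D$ as in the claim (without the sign condition on $A$); it is totally real iff $A>0$. *)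

(* Defs.v *)
From HB Require Import structures.
From mathcomp Require Import all_boot all_order all_algebra all_field.
Set Implicit Arguments. Unset Strict Implicit. Unset Printing Implicit Defensive.
Import Order.TTheory GRing.Theory Num.Theory.
Local Open Scope ring_scope.

Definition squarefreez (n : int) : Prop :=
  forall p : nat, prime p -> ~~ (p * p %| `|n|)%N.

(* Mahler measure of a polynomial over algC:
   |c| * prod_{roots z, |z| >= 1} |z|, where p = c * prod (X - z). *)
Definition mahler (p : {poly algC}) : algC :=
  `|lead_coef p| *
  \prod_(z <- sval (closed_field_poly_normal p) | 1 <= `|z|) `|z|.

Definition is_minpolyZ (a : algC) (p : {poly int}) : Prop :=
  [/\ zcontents p = 1,
      root (map_poly intr p) a &
      forall q : {poly int}, q != 0 -> root (map_poly intr q) a ->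
        (size p <= size q)%N].

Definition mahler_alg_ge (m a : algC) : Prop :=
  forall p : {poly int}, is_minpolyZ a p -> m <= mahler (map_poly intr p).

Definition inQgen (g x : algC) : Prop :=
  exists q : {poly rat}, x = (map_poly ratr q).[g].

Definition cycq_gen (A B D : int) : algC :=
  sqrtC (A%:~R * (D%:~R + B%:~R * sqrtC D%:~R)).

Definition OK_generator (g beta : algC) : Prop :=
  [/\ beta \in Aint, inQgen g beta & inQgen beta g].

(* Main.v *)
Require Import Defs.
From HB Require Import structures.
From mathcomp Require Import all_boot all_order all_algebra all_field.
From mathcomp Require Import zify ring.
Import Order.TTheory GRing.Theory Num.Theory.
Local Open Scope ring_scope.

Lemma sqf_dvd_sq (x y : nat) : (forall p, prime p -> ~~ (p * p %| x)%N) ->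
  (x %| y ^ 2)%N -> (x %| y)%N.
Proof.
move=> sqf hxy.
have [->|y0] := posnP y; first by rewrite dvdn0.
set g := gcdn x y.
have g0 : (0 < g)%N by rewrite gcdn_gt0 y0 orbT.
have xE : x = (x %/ g * g)%N by rewrite divnK // dvdn_gcdl.
have yE : y = (y %/ g * g)%N by rewrite divnK // dvdn_gcdr.
set a := (x %/ g)%N in xE *; set b := (y %/ g)%N in yE *.
have cab : coprime a b.
  apply/eqP; have := erefl g; rewrite {1}/g {1}xE {1}yE -muln_gcdl.
  by move/eqP; rewrite -{2}[g]mul1n eqn_pmul2r // => /eqP.
have ha : (a %| g)%N.
  move: hxy; rewrite xE yE expnMn -!mulnn mulnA dvdn_pmul2r //.
  by rewrite Gauss_dvdr // coprimeMr cab.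
have [a1|a1] := leqP a 1.
  case: a xE ha cab a1 => [|[|//]] xE _ _ _.
  - move: hxy; rewrite xE mul0n dvd0n expn_eq0 => /andP[/eqP y00 _].
    by rewrite y00 in y0.
  - by rewrite xE mul1n dvdn_gcdr.
have := sqf _ (pdiv_prime a1); rewrite xE.
by rewrite dvdn_mul // (dvdn_trans (pdiv_dvd _)).
Qed.

Lemma sqfz_dvd_sq (x y : int) : squarefreez x -> (x %| y ^+ 2)%Z -> (x %| y)%Z.
Proof. by move=> sq; rewrite !dvdzE abszX; apply: sqf_dvd_sq. Qed.

Lemma nt_main (A B C D m n t3 t4 : int) :
  0 < A -> odd `|A|%N -> squarefreez A -> 0 < B -> 0 < C ->
  D = B ^+ 2 + C ^+ 2 -> squarefreez D -> coprimez A D ->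
  (forall r : rat, r ^+ 2 != D%:~R) ->
  (m != 0) || (n != 0) ->
  m ^+ 2 + n ^+ 2 = 2 * A * D * t3 ->
  (C * (m ^+ 2 - n ^+ 2) - 2 * B * m * n) ^+ 2 = 16 * A ^+ 2 * D ^+ 3 * t4 ->
  A ^+ 2 * D ^+ 2 <= `|C * (m ^+ 2 - n ^+ 2) - 2 * B * m * n|.
Proof.
move=> A0 oA sA B0 C0 hD sD cAD NS mn0 h3 h4.
set F := C * (m ^+ 2 - n ^+ 2) - 2 * B * m * n in h4 *.
have D0 : 0 < D by rewrite hD ltr_wpDr ?sqr_ge0 ?exprn_gt0.
have Fnz : F != 0.
  apply/eqP=> F0.
  have CF : C * F = (C * m - B * n) ^+ 2 - D * n ^+ 2 by rewrite /F hD; ring.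
  rewrite F0 mulr0 in CF.
  have [n0|n0] := eqVneq n 0.
    move: F0; rewrite /F n0 expr0n /= subr0 !mulr0 subr0 => /eqP.
    rewrite mulf_eq0 (gt_eqF C0) /= expf_eq0 /= => m0.
    by move: mn0; rewrite m0 n0.
  have := NS ((C * m - B * n)%:~R / n%:~R).
  rewrite expr_div_n; apply/negP; rewrite negbK; apply/eqP.
  apply: (@mulIf _ (n%:~R ^+ 2)); first by rewrite expf_eq0 intr_eq0 n0.
  rewrite divfK ?expf_eq0 ?intr_eq0 ?n0 // -!rmorphXn -rmorphM /=.
  by congr intr; apply/eqP; rewrite -subr_eq0 -CF.
have D2F : (D ^+ 2 %| F)%Z.
  have hDF : (D %| F)%Z.
    apply: sqfz_dvd_sq => //; rewrite h4; apply/dvdzP.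
    by exists (16 * A ^+ 2 * D ^+ 2 * t4); ring.
  case/dvdzP: hDF => F1 F1E.
  have : (D %| F1)%Z.
    apply: sqfz_dvd_sq => //.
    have : F1 ^+ 2 * D ^+ 2 = (16 * A ^+ 2 * D * t4) * D ^+ 2.
      by rewrite -exprMn -F1E h4; ring.
    move/mulIf; rewrite expf_eq0 (gt_eqF D0) => /(_ isT) ->.
    by apply/dvdzP; exists (16 * A ^+ 2 * t4); ring.
  by rewrite F1E expr2 dvdz_mul2r ?(gt_eqF D0).
have AF : (A %| F)%Z.
  apply: sqfz_dvd_sq => //; rewrite h4; apply/dvdzP.
  by exists (16 * A * D ^+ 3 * t4); ring.
have AS : (A %| m ^+ 2 + n ^+ 2)%Z.
  by rewrite h3; apply/dvdzP; exists (2 * D * t3); ring.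
have iden : 2 * D * n ^+ 3 = 2 * n * B ^+ 2 * (m ^+ 2 + n ^+ 2)
   - (B * m - C * n) * (C * (m ^+ 2 + n ^+ 2) - F).
  by rewrite /F hD; ring.
have An3 : (A %| n ^+ 3)%Z.
  have c2D : coprimez A (2 * D).
    by rewrite coprimezE abszM coprimeMr coprimen2 oA -coprimezE cAD.
  rewrite -(Gauss_dvdzr _ c2D) iden.
  by rewrite rpredB ?dvdz_mull // rpredB ?dvdz_mull.
have An : (A %| n)%Z.
  apply: sqfz_dvd_sq => //; apply: sqfz_dvd_sq => //.
  by rewrite -exprM dvdz_mull.
have Am : (A %| m)%Z.
  apply: sqfz_dvd_sq => //.
  have -> : m ^+ 2 = (m ^+ 2 + n ^+ 2) - n ^+ 2 by ring.
  by rewrite rpredB // dvdz_exp.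
have A2F : (A ^+ 2 %| F)%Z.
  rewrite /F; case/dvdzP: Am => m1 ->; case/dvdzP: An => n1 ->.
  by apply/dvdzP; exists (C * (m1 ^+ 2 - n1 ^+ 2) - 2 * B * m1 * n1); ring.
have hdiv : (A ^+ 2 * D ^+ 2 %| F)%Z.
  by rewrite Gauss_dvdz ?A2F ?D2F // coprimezXl // coprimezXr.
move: hdiv; rewrite dvdzE => /dvdn_leq.
rewrite absz_gt0 Fnz => /(_ isT).
rewrite -(ler_nat int) !natz => h.
apply: le_trans h; rewrite abszE ger0_norm //.
by rewrite mulr_ge0 // exprn_ge0 // ltW.
Qed.

Lemma rat_part (A B C D : int) (q2 q3 : rat) (m n t3 t4 : int) :
  0 < A -> odd `|A|%N -> squarefreez A -> 0 < B -> 0 < C ->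
  D = B ^+ 2 + C ^+ 2 -> squarefreez D -> coprimez A D ->
  (forall r : rat, r ^+ 2 != D%:~R) ->
  (q2 != 0) || (q3 != 0) ->
  m%:~R = 4 * A%:~R * D%:~R * (q2 + B%:~R * q3) ->
  n%:~R = 4 * A%:~R * C%:~R * D%:~R * q3 ->
  t3%:~R = 8 * A%:~R * D%:~R * (q2 ^+ 2 + D%:~R * q3 ^+ 2 + 2 * B%:~R * q2 * q3) ->
  t4%:~R = 16 * A%:~R ^+ 2 * C%:~R ^+ 2 * D%:~R * (q2 ^+ 2 - D%:~R * q3 ^+ 2) ^+ 2 ->
  1 <= 16 * `|C%:~R * (q2 ^+ 2 - D%:~R * q3 ^+ 2)|.
Proof.
move=> A0 oA sA B0 C0 hD sD cAD NS q0 hm hn h3 h4.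
have D0 : 0 < D by rewrite hD ltr_wpDr ?sqr_ge0 ?exprn_gt0.
have A0' : (A%:~R : rat) != 0 by rewrite intr_eq0 gt_eqF.
have C0' : (C%:~R : rat) != 0 by rewrite intr_eq0 gt_eqF.
have D0' : (D%:~R : rat) != 0 by rewrite intr_eq0 gt_eqF.
have mn0 : (m != 0) || (n != 0).
  apply: contraLR q0; rewrite negb_or !negbK => /andP[/eqP m0 /eqP n0].
  move: hn; rewrite n0 rmorph0 => /esym /eqP; rewrite !mulf_eq0 !(negbTE A0') (negbTE C0') (negbTE D0') /= => /eqP q30.
  move: hm; rewrite m0 q30 rmorph0 mulr0 addr0 => /esym /eqP.
  rewrite !mulf_eq0 !(negbTE A0') (negbTE D0') /= => /eqP ->; by rewrite eqxx.
have e3 : m ^+ 2 + n ^+ 2 = 2 * A * D * t3.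
  apply: (@intr_inj rat); rewrite !(rmorphD, rmorphM, rmorphXn) /= hm hn h3 hD.
  ring.
have e4 : (C * (m ^+ 2 - n ^+ 2) - 2 * B * m * n) ^+ 2 = 16 * A ^+ 2 * D ^+ 3 * t4.
  apply: (@intr_inj rat); rewrite !(rmorphB, rmorphM, rmorphXn) /=.
  rewrite hm hn h4 hD; ring.
have := @nt_main A B C D m n t3 t4 A0 oA sA B0 C0 hD sD cAD NS mn0 e3 e4.
rewrite -(ler_int rat) => H.
have eF : ((C * (m ^+ 2 - n ^+ 2) - 2 * B * m * n)%:~R : rat)
    = 16 * A%:~R ^+ 2 * D%:~R ^+ 2 * (C%:~R * (q2 ^+ 2 - D%:~R * q3 ^+ 2)).
  rewrite !(rmorphB, rmorphM, rmorphXn) /= hm hn hD; field.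
  done.
move: H; rewrite intr_norm eF !(rmorphM, rmorphXn) /=.
have P : (0 : rat) < A%:~R ^+ 2 * D%:~R ^+ 2 by rewrite mulr_gt0 // exprn_gt0 // ltr0z.
rewrite normrM ger0_norm; last by rewrite -mulrA mulr_ge0 // ltW.
set K := `|_|.
have -> : 16 * A%:~R ^+ 2 * D%:~R ^+ 2 * K = (A%:~R ^+ 2 * D%:~R ^+ 2) * (16 * K) by ring.
by rewrite -{1}[_ * _]mulr1 ler_pM2l.
Qed.

Lemma prod_ge1 (f : algC -> algC) (rs : seq algC) :
  (forall z, 1 <= f z) -> 1 <= \prod_(z <- rs) f z.
Proof.
move=> hf; apply: (big_ind (fun x => 1 <= x)) => // x y; exact: mulr_ege1.
Qed.

Lemma prod_sub_le (f : algC -> algC) (L rs : seq algC) :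
  (forall z, 1 <= f z) -> uniq L -> {subset L <= rs} ->
  \prod_(z <- L) f z <= \prod_(z <- rs) f z.
Proof.
move=> hf; elim: L rs => [|x L IH] rs uL sub.
  by rewrite big_nil prod_ge1.
have xrs : x \in rs by apply: sub; rewrite inE eqxx.
rewrite (perm_big _ (perm_to_rem xrs)) !big_cons.
have f0 : 0 <= f x by apply: le_trans (hf x).
move: uL => /= /andP[xL uL].
rewrite ler_pM2l ?(lt_le_trans ltr01 (hf x)) //.
apply: IH => // y yL; apply: rem_mem; last by apply: sub; rewrite inE yL orbT.
by apply: contraNneq xL => <-.
Qed.

Definition fm (z : algC) := if 1 <= `|z| then `|z| else 1.

Lemma fm_ge1 z : 1 <= fm z.
Proof. by rewrite /fm; case: ifP. Qed.

Lemma fm_norm z : `|z| <= fm z.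
Proof.
rewrite /fm; case: ifP => // h; apply: ltW.
by rewrite real_ltNge ?h ?normr_real ?real1.
Qed.

Lemma diff_le x y : `|x - y| <= 2 * fm x * fm y.
Proof.
apply: le_trans (ler_normB x y) _.
apply: le_trans (lerD (fm_norm x) (fm_norm y)) _.
have h1 := fm_ge1 x; have h2 := fm_ge1 y.
rewrite -subr_ge0.
have -> : 2 * fm x * fm y - (fm x + fm y) = (fm x - 1) * (fm y - 1) + (fm x * fm y - 1).
  by rewrite mulr2n; ring.
by rewrite addr_ge0 // ?mulr_ge0 ?subr_ge0 // mulr_ege1.
Qed.

Lemma mahler_ge (P : {poly algC}) (L : seq algC) :
  P != 0 -> 1 <= `|lead_coef P| -> uniq L -> (forall z, z \in L -> root P z) ->
  \prod_(z <- L) fm z <=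
  `|lead_coef P| * \prod_(z <- sval (closed_field_poly_normal P) | 1 <= `|z|) `|z|.
Proof.
move=> P0 lc1 uL rL.
case: (closed_field_poly_normal P) => rs /= Prs.
rewrite [X in _ <= _ * X]big_mkcond /=.
have -> : \prod_(i <- rs) (if 1 <= `|i| then `|i| else 1) = \prod_(i <- rs) fm i by [].
have lc0 : lead_coef P != 0 by rewrite lead_coef_eq0.
apply: le_trans (_ : \prod_(z <- rs) fm z <= _).
  apply: prod_sub_le => //; first exact: fm_ge1.
  move=> z zL; have := rL z zL; rewrite Prs rootZ // root_prod_XsubC //.
rewrite -{1}[\prod_(z <- rs) fm z]mul1r ler_pM2r //.
exact: (lt_le_trans ltr01 (prod_ge1 fm rs fm_ge1)).
Qed.

Lemma monic_sq_sub (c d : algC) : ('X^2 - c%:P) ^+ 2 - d%:P \is monic.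
Proof.
have m0 : ('X^2 - c%:P) \is monic by rewrite monicXnsubC.
have m1 : ('X^2 - c%:P) ^+ 2 \is monic by rewrite monic_exp.
rewrite monicE lead_coefDl ?(monicP m1) //.
rewrite size_polyN (leq_ltn_trans (size_polyC_leq1 _)) //.
rewrite expr2 size_monicM ?monic_neq0 // size_XnsubC //.
Qed.

Section Core.
Variables (A B C D : int).
Hypothesis NS : forall r : rat, r ^+ 2 != D%:~R.
Variables (s g : algC).
Hypothesis hs : s ^+ 2 = D%:~R.
Hypothesis hg : g ^+ 2 = A%:~R * (D%:~R + B%:~R * s).
Hypothesis A0 : A != 0.
Hypothesis C0 : C != 0.
Hypothesis hD : D = B ^+ 2 + C ^+ 2.

Lemma Ls (a b : rat) : ratr a + ratr b * s = 0 -> a = 0 /\ b = 0.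
Proof.
move=> h.
have [b0|b0] := eqVneq b 0.
  by move: h; rewrite b0 rmorph0 mul0r addr0 => /eqP; rewrite fmorph_eq0 => /eqP.
have se : s = ratr (- a / b).
  rewrite fmorph_div rmorphN /=; apply: (@mulIf _ (ratr b)).
    by rewrite fmorph_eq0.
  by rewrite divfK ?fmorph_eq0 // mulrC; apply/eqP; rewrite -addr_eq0 addrC h.
have := NS (- a / b); rewrite -(fmorph_eq (ratr : {rmorphism rat -> algC})) /=.
by rewrite rmorphXn /= -se hs ratr_int eqxx.
Qed.

Lemma Lnorm (c d : rat) : ratr c + ratr d * s != 0 -> c ^+ 2 - d ^+ 2 * D%:~R != 0.
Proof.
move=> nz; apply/negP => /eqP N0.
have [d0|d0] := eqVneq d 0.
  move: N0 nz; rewrite d0 expr0n /= mul0r subr0 => /eqP.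
  by rewrite expf_eq0 /= => /eqP ->; rewrite rmorph0 mul0r addr0 eqxx.
have := NS (c / d); rewrite expr_div_n; apply/negP; rewrite negbK.
apply/eqP; apply: (@mulIf _ (d ^+ 2)); first by rewrite expf_eq0.
by rewrite divfK ?expf_eq0 //; apply/eqP; rewrite -subr_eq0 mulrC N0.
Qed.

Arguments Ls {a b}.

Definition Qs (z : algC) := exists c d : rat, z = ratr c + ratr d * s.

Lemma Qs_inv z : z != 0 -> Qs z -> Qs z^-1.
Proof.
move=> z0 [c [d ze]].
have z0' := z0; rewrite ze in z0'; have N0 := Lnorm _ _ z0'.
set N := c ^+ 2 - d ^+ 2 * D%:~R in N0.
exists (c / N), (- d / N).
apply: (mulfI z0); rewrite mulfV //.
have NE : ratr N = ratr c ^+ 2 - ratr d ^+ 2 * s ^+ 2 :> algC.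
  by rewrite /N hs; ring.
have Nz : ratr N != 0 :> algC by rewrite fmorph_eq0.
rewrite ze !fmorph_div rmorphN /=.
rewrite NE; rewrite NE in Nz; field; by move: Nz; rewrite -exprMn.
Qed.

Lemma Qs_mul x y : Qs x -> Qs y -> Qs (x * y).
Proof.
move=> [c [d ->]] [c' [d' ->]].
exists (c * c' + d * d' * D%:~R), (c * d' + d * c').
have -> : ratr (c * c' + d * d' * D%:~R) + ratr (c * d' + d * c') * s
  = (ratr c + ratr d * s) * (ratr c' + ratr d' * s)
    + ratr d * ratr d' * (D%:~R - s ^+ 2) :> algC by ring.
by rewrite hs subrr mulr0 addr0.
Qed.

Lemma Lg : ~ Qs g.
Proof.
move=> [c [d ge]].
have E : ratr (c ^+ 2 + d ^+ 2 * D%:~R - A%:~R * D%:~R)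
         + ratr (2 * c * d - A%:~R * B%:~R) * s
   = (ratr c + ratr d * s) ^+ 2 - A%:~R * (D%:~R + B%:~R * s)
     + ratr d ^+ 2 * (D%:~R - s ^+ 2) :> algC by ring.
rewrite hs subrr mulr0 addr0 -ge hg subrr in E.
have [e1 e2] := Ls E.
move/eqP: e1; rewrite subr_eq0 => /eqP e1.
move/eqP: e2; rewrite subr_eq0 => /eqP e2.
have A0' : (A%:~R : rat) != 0 by rewrite intr_eq0.
have C0' : (C%:~R : rat) != 0 by rewrite intr_eq0.
have := NS ((c ^+ 2 - d ^+ 2 * D%:~R) / (A%:~R * C%:~R)).
apply/negP; rewrite negbK; apply/eqP.
have E2 : (c ^+ 2 - d ^+ 2 * D%:~R) ^+ 2
   = (c ^+ 2 + d ^+ 2 * D%:~R) ^+ 2 - D%:~R * (2 * c * d) ^+ 2 by ring.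
rewrite expr_div_n E2 e1 e2 hD.
field.
by rewrite C0' A0'.
Qed.

Lemma L2 (a0 a1 a2 a3 : rat) :
  ratr a0 + ratr a1 * s + g * (ratr a2 + ratr a3 * s) = 0 ->
  [/\ a0 = 0, a1 = 0, a2 = 0 & a3 = 0].
Proof.
move=> h.
have [w0|w0] := eqVneq (ratr a2 + ratr a3 * s : algC) 0.
  have [-> ->] := Ls w0.
  by move: h; rewrite w0 mulr0 addr0 => /Ls [-> ->].
exfalso; apply: Lg.
have -> : g = (- (ratr a0 + ratr a1 * s)) * (ratr a2 + ratr a3 * s)^-1.
  apply: (@mulIf _ (ratr a2 + ratr a3 * s)) => //.
  rewrite mulfVK //; apply/eqP; rewrite -addr_eq0 addrC.
  by rewrite h.
apply: Qs_mul; last by apply: Qs_inv => //; exists a2, a3.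
by exists (- a0), (- a1); rewrite !rmorphN mulNr opprD.
Qed.

Variable h : algC.
Hypothesis hh : h ^+ 2 = A%:~R * (D%:~R - B%:~R * s).

Definition okpt (t : algC) := t = g \/ t = - g \/ t = h \/ t = - h.

Lemma L1 (P : {poly rat}) : exists p0 p1 p2 p3 : rat,
  forall e t : algC, (e = 1 \/ e = -1) ->
  t ^+ 2 = A%:~R * (D%:~R + e * B%:~R * s) ->
  (map_poly ratr P).[t] = ratr p0 + ratr p1 * e * s + t * (ratr p2 + ratr p3 * e * s).
Proof.
elim/poly_ind: P => [|P c [p0 [p1 [p2 [p3 IH]]]]].
  by exists 0, 0, 0, 0 => e t _ _; rewrite map_poly0 horner0 !rmorph0; ring.
exists (c + p2 * A%:~R * D%:~R + p3 * A%:~R * B%:~R * D%:~R),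
       (p2 * A%:~R * B%:~R + p3 * A%:~R * D%:~R), p0, p1 => e t he ht.
rewrite rmorphD rmorphM /= map_polyX map_polyC /= hornerMXaddC (IH e t he ht).
have -> : (ratr p0 + ratr p1 * e * s + t * (ratr p2 + ratr p3 * e * s)) * t + ratr c
  = ratr c + (ratr p2 + ratr p3 * e * s) * t ^+ 2 + t * (ratr p0 + ratr p1 * e * s)
  by ring.
rewrite ht.
case: he => ->.
- have -> : ratr c + (ratr p2 + ratr p3 * 1 * s) * (A%:~R * (D%:~R + 1 * B%:~R * s))
    = ratr (c + p2 * A%:~R * D%:~R + p3 * A%:~R * B%:~R * D%:~R) +
      ratr (p2 * A%:~R * B%:~R + p3 * A%:~R * D%:~R) * 1 * s
      + ratr p3 * A%:~R * B%:~R * (s ^+ 2 - D%:~R) :> algC by ring.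
  by rewrite hs subrr mulr0 addr0.
- have -> : ratr c + (ratr p2 + ratr p3 * -1 * s) * (A%:~R * (D%:~R + -1 * B%:~R * s))
    = ratr (c + p2 * A%:~R * D%:~R + p3 * A%:~R * B%:~R * D%:~R) +
      ratr (p2 * A%:~R * B%:~R + p3 * A%:~R * D%:~R) * -1 * s
      + ratr p3 * A%:~R * B%:~R * (s ^+ 2 - D%:~R) :> algC by ring.
  by rewrite hs subrr mulr0 addr0.
Qed.

Lemma okpt_sq t : okpt t -> exists e : algC, (e = 1 \/ e = -1) /\
   t ^+ 2 = A%:~R * (D%:~R + e * B%:~R * s).
Proof.
case=> [->|[->|[->|->]]].
- by exists 1; split; [left | rewrite mul1r].
- by exists 1; split; [left | rewrite sqrrN mul1r].
- by exists (-1); split; [right | rewrite hh mulN1r mulNr].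
- by exists (-1); split; [right | rewrite sqrrN hh mulN1r mulNr].
Qed.

Lemma transfer (R : {poly rat}) : (map_poly ratr R).[g] = 0 ->
  forall t, okpt t -> (map_poly ratr R).[t] = 0.
Proof.
have [p0 [p1 [p2 [p3 HR]]]] := L1 R.
move=> Rg t /okpt_sq [e [he ht]].
rewrite (HR e t he ht).
have := HR 1 g (or_introl erefl); rewrite mul1r hg !mulr1 => /(_ erefl).
rewrite Rg => /esym /L2 [-> -> -> ->].
by rewrite !rmorph0; ring.
Qed.

Lemma map_intr_ratr (p : {poly int}) :
  map_poly (intr : int -> algC) p = map_poly ratr (map_poly (intr : int -> rat) p).
Proof. by rewrite -map_poly_comp; apply: eq_map_poly => k /=; rewrite ratr_int. Qed.

Variable Q : {poly rat}.
Let bz (t : algC) := (map_poly (ratr : rat -> algC) Q).[t].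

Lemma root_transfer (R0 : {poly rat}) : root (map_poly ratr R0) (bz g) ->
  forall t, okpt t -> root (map_poly ratr R0) (bz t).
Proof.
move=> r0 t pt; rewrite /root /bz -horner_comp -map_comp_poly.
by rewrite (transfer (R0 \Po Q)) // map_comp_poly horner_comp; apply/eqP.
Qed.

Lemma inv_transfer (Q' : {poly rat}) : (map_poly ratr Q').[bz g] = g ->
  forall t, okpt t -> (map_poly ratr Q').[bz t] = t.
Proof.
move=> hQ t pt.
have := @transfer (Q' \Po Q - 'X) _ t pt.
rewrite rmorphB /= map_comp_poly map_polyX !hornerE horner_comp.
rewrite horner_comp => H; apply/eqP; rewrite -subr_eq0; apply/eqP; apply: H.
by rewrite -/(bz g) hQ subrr.
Qed.

Hypothesis Apos : 0 < A.
Hypothesis Bpos : 0 < B.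
Hypothesis Cpos : 0 < C.
Hypothesis oA : odd `|A|%N.
Hypothesis sA : squarefreez A.
Hypothesis sD : squarefreez D.
Hypothesis cAD : coprimez A D.
Hypothesis s0 : 0 <= s.
Hypothesis hgh : g * h = A%:~R * C%:~R * s.

Lemma int_of (r : rat) : (ratr r : algC) \in Aint -> exists k : int, r = k%:~R.
Proof.
move=> hA; have := Cint_rat_Aint (Crat_rat r) hA; rewrite Cint_rat.
by case/intrP => k ->; exists k.
Qed.

Lemma Aint_s : s \in Aint.
Proof.
apply: (@root_monic_Aint ('X^2 - (D%:~R)%:P)).
- by rewrite /root !hornerE hs subrr.
- by rewrite monicXnsubC.
- by rewrite polyOverXnsubC intr_int.
Qed.

Lemma Aint_sq t : t ^+ 2 = A%:~R * (D%:~R + B%:~R * s) \/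
                  t ^+ 2 = A%:~R * (D%:~R - B%:~R * s) -> t \in Aint.
Proof.
move=> ht.
pose pz : {poly int} := ('X^2 - (A * D)%:P) ^+ 2 - (A ^+ 2 * B ^+ 2 * D)%:P.
have mE : map_poly (intr : int -> algC) pz
    = ('X^2 - ((A * D)%:~R)%:P) ^+ 2 - ((A ^+ 2 * B ^+ 2 * D)%:~R)%:P.
  by rewrite !(rmorphB, rmorphXn) /= map_polyX !map_polyC.
apply: (@root_monic_Aint (map_poly intr pz)).
- rewrite mE /root !(hornerD, hornerN, hornerC, horner_exp, hornerXn, hornerX); apply/eqP.
  case: ht => ->;
  (transitivity (A%:~R ^+ 2 * B%:~R ^+ 2 * (s ^+ 2 - D%:~R) : algC); first ring);
  by rewrite hs subrr mulr0.
- by rewrite mE monic_sq_sub.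
- by apply/polyOverP => i; rewrite coef_map intr_int.
Qed.

Lemma main_bound (beta : algC) (Q' : {poly rat}) :
  beta \in Aint -> beta = bz g -> (map_poly ratr Q').[beta] = g ->
  forall p : {poly int}, is_minpolyZ beta p ->
  (A%:~R * s) / 48%:R <= mahler (map_poly intr p).
Proof.
move=> bA bE gQ p [pc proot _].
have gQ' : (map_poly ratr Q').[bz g] = g by rewrite -bE.
have inv := inv_transfer _ gQ'.
have ok1 : okpt g by left.
have ok2 : okpt (- g) by right; left.
have ok3 : okpt h by right; right; left.
have ok4 : okpt (- h) by right; right; right.
have ABnz : (A * B)%:~R != 0 :> rat by rewrite intr_eq0 mulf_neq0 // gt_eqF.
have g0 : g != 0.
  apply/eqP => g0; move: hg; rewrite g0 expr2 mul0r => /esym E.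
  have : ratr (A * D)%:~R + ratr (A * B)%:~R * s = 0 :> algC by rewrite -E; ring.
  by case/Ls => _ /eqP; rewrite (negbTE ABnz).
have h0 : h != 0.
  apply/eqP => h0; move: hh; rewrite h0 expr2 mul0r => /esym E.
  have : ratr (A * D)%:~R + ratr (- (A * B))%:~R * s = 0 :> algC by rewrite -E; ring.
  by case/Ls => _ /eqP; rewrite rmorphN oppr_eq0 (negbTE ABnz).
have g2h2 : g ^+ 2 != h ^+ 2.
  apply/eqP => E; move: E; rewrite hg hh => /eqP; rewrite -subr_eq0 => /eqP E.
  have : ratr 0 + ratr (2 * (A * B)%:~R) * s = 0 :> algC by rewrite -E; ring.
  by case/Ls => _ /eqP; rewrite mulf_eq0 (negbTE ABnz) orbF.
have gng : g != - g.
  apply: contra g0 => /eqP E; have : g *+ 2 == 0 by rewrite mulr2n {2}E subrr.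
  by rewrite mulrn_eq0.
have hnh : h != - h.
  apply: contra h0 => /eqP E; have : h *+ 2 == 0 by rewrite mulr2n {2}E subrr.
  by rewrite mulrn_eq0.
have gnh : g != h by apply: contra g2h2 => /eqP ->.
have gnmh : g != - h by apply: contra g2h2 => /eqP ->; rewrite sqrrN.
have binj t1 t2 : okpt t1 -> okpt t2 -> bz t1 = bz t2 -> t1 = t2.
  by move=> o1 o2 E; rewrite -(inv _ o1) -(inv _ o2) E.
have [q0 [q1 [q2 [q3 HQ]]]] := L1 Q.
have Eg := HQ 1 g (or_introl erefl) ltac:(by rewrite mul1r).
have Emg := HQ 1 (- g) (or_introl erefl) ltac:(by rewrite sqrrN mul1r).
have Eh := HQ (-1) h (or_intror erefl) ltac:(by rewrite hh mulN1r mulNr).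
have Emh := HQ (-1) (- h) (or_intror erefl) ltac:(by rewrite sqrrN hh mulN1r mulNr).
rewrite -/(bz g) in Eg; rewrite -/(bz (- g)) in Emg; rewrite -/(bz h) in Eh; rewrite -/(bz (- h)) in Emh.
set u := (ratr q2 : algC); set v := (ratr q3 : algC).
have gamE : bz g - bz (- g) = 2 * g * (u + v * s) by rewrite Eg Emg; ring.
have gam'E : bz h - bz (- h) = 2 * h * (u - v * s) by rewrite Eh Emh; ring.
have bAint t : okpt t -> bz t \in Aint.
  move=> ot; have [Pm [Pme _] _] := minCpolyP beta.
  apply: (root_monic_Aint _ (minCpoly_monic beta)) => //.
  rewrite Pme; apply: root_transfer => //.
  by rewrite -bE -Pme root_minCpoly.
have gA : g \in Aint by apply: Aint_sq; left.
have hA : h \in Aint by apply: Aint_sq; right.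
have gamA : 2 * g * (u + v * s) \in Aint by rewrite -gamE rpredB ?bAint.
have gam'A : 2 * h * (u - v * s) \in Aint by rewrite -gam'E rpredB ?bAint.
have [m hm] : exists m : int, 4 * A%:~R * D%:~R * (q2 + B%:~R * q3) = m%:~R.
  apply: int_of.
  have -> : ratr (4 * A%:~R * D%:~R * (q2 + B%:~R * q3))
    = (2 * g * (u + v * s)) * g + (2 * h * (u - v * s)) * h.
    have -> : (2 * g * (u + v * s)) * g + (2 * h * (u - v * s)) * h
      = 2 * g ^+ 2 * (u + v * s) + 2 * h ^+ 2 * (u - v * s) by ring.
    rewrite hg hh.
    have -> : 2 * (A%:~R * (D%:~R + B%:~R * s)) * (u + v * s) +
              2 * (A%:~R * (D%:~R - B%:~R * s)) * (u - v * s)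
      = 4 * A%:~R * (D%:~R * u + B%:~R * v * s ^+ 2) by ring.
    by rewrite hs /u /v; ring.
  by apply: rpredD; apply: rpredM.
have [n hn] : exists n : int, 4 * A%:~R * C%:~R * D%:~R * q3 = n%:~R.
  apply: int_of.
  have -> : ratr (4 * A%:~R * C%:~R * D%:~R * q3)
    = (2 * g * (u + v * s)) * h - (2 * h * (u - v * s)) * g.
    have -> : (2 * g * (u + v * s)) * h - (2 * h * (u - v * s)) * g
      = 4 * (g * h) * v * s by ring.
    rewrite hgh.
    have -> : 4 * (A%:~R * C%:~R * s) * v * s = 4 * A%:~R * C%:~R * v * s ^+ 2 by ring.
    by rewrite hs /v; ring.
  by apply: rpredB; apply: rpredM.
have [t3 h3] : exists t3 : int,
    8 * A%:~R * D%:~R * (q2 ^+ 2 + D%:~R * q3 ^+ 2 + 2 * B%:~R * q2 * q3) = t3%:~R.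
  apply: int_of.
  have -> : ratr (8 * A%:~R * D%:~R * (q2 ^+ 2 + D%:~R * q3 ^+ 2 + 2 * B%:~R * q2 * q3))
    = (2 * g * (u + v * s)) ^+ 2 + (2 * h * (u - v * s)) ^+ 2.
    have -> : (2 * g * (u + v * s)) ^+ 2 + (2 * h * (u - v * s)) ^+ 2
      = 4 * g ^+ 2 * (u + v * s) ^+ 2 + 4 * h ^+ 2 * (u - v * s) ^+ 2 by ring.
    rewrite hg hh.
    have -> : 4 * (A%:~R * (D%:~R + B%:~R * s)) * (u + v * s) ^+ 2 +
              4 * (A%:~R * (D%:~R - B%:~R * s)) * (u - v * s) ^+ 2
      = 8 * A%:~R * (D%:~R * u ^+ 2 + D%:~R * v ^+ 2 * s ^+ 2
                     + 2 * B%:~R * u * v * s ^+ 2) by ring.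
    by rewrite hs /u /v; ring.
  by apply: rpredD; apply: rpredX.
have XE : (2 * g * (u + v * s)) * (2 * h * (u - v * s))
    = 4 * A%:~R * C%:~R * s * (u ^+ 2 - v ^+ 2 * D%:~R).
  have -> : (2 * g * (u + v * s)) * (2 * h * (u - v * s))
    = 4 * (g * h) * (u ^+ 2 - v ^+ 2 * s ^+ 2) by ring.
  by rewrite hgh hs; ring.
have [t4 h4] : exists t4 : int,
    16 * A%:~R ^+ 2 * C%:~R ^+ 2 * D%:~R * (q2 ^+ 2 - D%:~R * q3 ^+ 2) ^+ 2 = t4%:~R.
  apply: int_of.
  have -> : ratr (16 * A%:~R ^+ 2 * C%:~R ^+ 2 * D%:~R * (q2 ^+ 2 - D%:~R * q3 ^+ 2) ^+ 2)
    = ((2 * g * (u + v * s)) * (2 * h * (u - v * s))) ^+ 2.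
    rewrite XE.
    have -> : (4 * A%:~R * C%:~R * s * (u ^+ 2 - v ^+ 2 * D%:~R)) ^+ 2
      = 16 * A%:~R ^+ 2 * C%:~R ^+ 2 * s ^+ 2 * (u ^+ 2 - v ^+ 2 * D%:~R) ^+ 2 by ring.
    by rewrite hs /u /v; ring.
  by apply: rpredX; apply: rpredM.
have q23 : (q2 != 0) || (q3 != 0).
  case: (boolP ((q2 != 0) || (q3 != 0))) => //; rewrite negb_or !negbK => /andP[/eqP e2 /eqP e3].
  have : bz g = bz (- g) by rewrite Eg Emg e2 e3 rmorph0; ring.
  by move/(binj _ _ ok1 ok2)/eqP; rewrite (negbTE gng).
have key := @rat_part A B C D q2 q3 m n t3 t4 Apos oA sA Bpos Cpos hD sD cAD NS q23
              (esym hm) (esym hn) (esym h3) (esym h4).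
set gam := 2 * g * (u + v * s) in XE gamE gamA.
set gam' := 2 * h * (u - v * s) in XE gam'E gam'A.
have As0 : 0 <= A%:~R * s :> algC by rewrite mulr_ge0 // ler0z ltW.
have Xlow : A%:~R * s / 4 <= `|gam * gam'|.
  rewrite XE.
  have -> : 4 * A%:~R * C%:~R * s * (u ^+ 2 - v ^+ 2 * D%:~R)
     = (4 * (A%:~R * s)) * ratr (C%:~R * (q2 ^+ 2 - D%:~R * q3 ^+ 2)) by rewrite /u /v; ring.
  rewrite normrM (ger0_norm (_ : 0 <= 4 * (A%:~R * s))); last by rewrite mulr_ge0.
  set r := `|ratr _|.
  have kr : 1 <= 16 * r.
    have := key; rewrite -(ler_rat algC) rmorph1 rmorphM /= (ratr_norm algC).
    by rewrite rmorph_nat.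
  rewrite -subr_ge0.
  have -> : 4 * (A%:~R * s) * r - A%:~R * s / 4 = (A%:~R * s / 4) * (16 * r - 1) by field.
  by rewrite mulr_ge0 ?subr_ge0 // divr_ge0.
have Xup : `|gam * gam'| <= 4 * (fm (bz g) * fm (bz (- g)) * fm (bz h) * fm (bz (- h))).
  rewrite normrM -gamE -gam'E.
  have := ler_pM (normr_ge0 _) (normr_ge0 _) (diff_le (bz g) (bz (- g))) (diff_le (bz h) (bz (- h))).
  move/le_trans; apply; rewrite le_eqVlt; apply/orP; left; apply/eqP; ring.
have bne t1 t2 : okpt t1 -> okpt t2 -> t1 != t2 -> bz t1 != bz t2.
  by move=> o1 o2; apply: contra => /eqP /(binj _ _ o1 o2) ->.
have rootP t : okpt t -> root (map_poly intr p) (bz t).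
  move=> ot; rewrite map_intr_ratr; apply: root_transfer => //.
  by rewrite -bE -map_intr_ratr.
have p0 : p != 0 by apply/eqP => p0; move: pc; rewrite p0 zcontents0.
have lcp : (intr (lead_coef p) : algC) != 0 by rewrite intr_eq0 lead_coef_eq0.
have P0 : map_poly (intr : int -> algC) p != 0 by rewrite map_poly_eq0_id0.
have lc1 : 1 <= `|lead_coef (map_poly (intr : int -> algC) p)|.
  rewrite lead_coef_map_id0 ?rmorph0 // -intr_norm ler1z -gtz0_ge1 normr_gt0.
  by rewrite lead_coef_eq0.
have uL : uniq [:: bz g; bz (- g); bz h; bz (- h)].
  rewrite /= !inE !negb_or !bne //.
  - by apply: contra gnh => /eqP /oppr_inj ->.
  - by apply: contra gnmh => /eqP E; rewrite -E opprK.
have rL : forall z, z \in [:: bz g; bz (- g); bz h; bz (- h)] -> root (map_poly intr p) z.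
  by move=> z; rewrite !inE => /or4P [] /eqP ->; apply: rootP.
have Mp := @mahler_ge _ _ P0 lc1 uL rL.
rewrite !big_cons big_nil mulr1 !mulrA -/(mahler _) in Mp.
set F := fm (bz g) * fm (bz (- g)) * fm (bz h) * fm (bz (- h)) in Xup Mp.
have F0 : 0 <= F by rewrite /F !mulr_ge0 // (le_trans ler01 (fm_ge1 _)).
apply: le_trans Mp.
have H : A%:~R * s / 4 <= 4 * F := le_trans Xlow Xup.
rewrite -subr_ge0.
have -> : F - A%:~R * s / 48 = (4 * F - A%:~R * s / 4) / 12 + F * (2 / 3) by field.
rewrite addr_ge0 //; first by rewrite divr_ge0 // subr_ge0.
by rewrite mulr_ge0 // divr_ge0.
Qed.
End Core.

Lemma NS_of (D : int) : squarefreez D -> 1 < D -> forall r : rat, r ^+ 2 != D%:~R.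
Proof.
move=> sD D1 r; apply/eqP => E.
have rA : (ratr r : algC) \in Aint.
  apply: (@root_monic_Aint ('X^2 - (D%:~R)%:P)).
  - by rewrite /root !(hornerD, hornerN, hornerC, hornerXn) -rmorphXn E rmorph_int subrr.
  - by rewrite monicXnsubC.
  - by rewrite polyOverXnsubC intr_int.
have [k rk] := int_of _ rA.
have kD : k ^+ 2 = D by apply: (@intr_inj rat); rewrite rmorphXn /= -rk E.
have hD : `|D|%N = (`|k| ^ 2)%N by rewrite -kD abszX.
have hD1 : (1 < `|D|)%N.
  by rewrite -(ltz_nat) abszE gtr0_norm // (lt_trans ltr01 D1).
have k1 : (1 < `|k|%N)%N.
  rewrite ltnNge; apply/negP => k1; move: hD1; rewrite hD.
  by case: (`|k|%N) k1 => [|[]].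
have := sD _ (pdiv_prime k1).
by rewrite -kD abszX expnS expn1 dvdn_mul // pdiv_dvd.
Qed.

Theorem proposition5p1 (A B C D : int) :
  0 < A -> odd `|A|%N -> squarefreez A ->
  0 < B -> 0 < C -> D = B ^+ 2 + C ^+ 2 -> squarefreez D ->
  coprimez A D ->
  forall beta : algC, OK_generator (cycq_gen A B D) beta ->
    mahler_alg_ge ((A%:~R * sqrtC D%:~R) / 48%:R) beta.
Proof.
move=> A0 oA sA B0 C0 hD sD cAD beta [bA [Q bQ] [Q' gQ']] p hp.
have D1 : 1 < D.
  rewrite hD -[X in X < _]addr0 ler_ltD ?exprn_gt0 //.
  by rewrite -gtz0_ge1 exprn_gt0.
have NS := @NS_of D sD D1.
have D0 : 0 < D by apply: lt_trans D1.
set s := sqrtC (D%:~R : algC).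
have hs : s ^+ 2 = D%:~R by rewrite /s sqrtCK.
have s0 : 0 <= s by rewrite /s sqrtC_ge0 ler0z ltW.
have hg : cycq_gen A B D ^+ 2 = A%:~R * (D%:~R + B%:~R * s) by rewrite /cycq_gen sqrtCK.
set h := sqrtC (A%:~R * (D%:~R - B%:~R * s)).
have hh : h ^+ 2 = A%:~R * (D%:~R - B%:~R * s) by rewrite /h sqrtCK.
have Ap : 0 <= (A%:~R : algC) by rewrite ler0z ltW.
have Bp : 0 <= (B%:~R : algC) by rewrite ler0z ltW.
have sB : B%:~R <= s.
  rewrite -(ler_pXn2r (n := 2)) ?nnegrE // hs -rmorphXn ler_int hD.
  by rewrite lerDl sqr_ge0.
have Cp : 0 <= (C%:~R : algC) by rewrite ler0z ltW.
have Dm : 0 <= A%:~R * (D%:~R - B%:~R * s) :> algC.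
  have -> : (D%:~R - B%:~R * s : algC) = s * (s - B%:~R) by rewrite -hs; ring.
  by rewrite !mulr_ge0 // subr_ge0.
have Dp : 0 <= A%:~R * (D%:~R + B%:~R * s) :> algC.
  by rewrite !mulr_ge0 // ?addr_ge0 ?mulr_ge0 // ler0z ltW.
have g0 : 0 <= cycq_gen A B D by rewrite /cycq_gen sqrtC_ge0.
have h0 : 0 <= h by rewrite /h sqrtC_ge0.
have hgh : cycq_gen A B D * h = A%:~R * C%:~R * s.
  have E : (cycq_gen A B D * h) ^+ 2 = (A%:~R * C%:~R * s) ^+ 2.
    rewrite exprMn hg hh.
    transitivity (A%:~R ^+ 2 * ((D%:~R) ^+ 2 - B%:~R ^+ 2 * s ^+ 2) : algC); first ring.
    have -> : (A%:~R * C%:~R * s) ^+ 2 = A%:~R ^+ 2 * C%:~R ^+ 2 * s ^+ 2 :> algC by ring.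
    rewrite hs hD; ring.
  by rewrite -[LHS]sqrCK ?mulr_ge0 // E sqrCK // !mulr_ge0.
have := (@main_bound A B C D NS s (cycq_gen A B D) hs hg
          (lt0r_neq0 A0) (lt0r_neq0 C0) hD h hh Q A0 B0 C0 oA sA sD cAD s0 hgh beta Q' bA bQ).
by rewrite -gQ' => /(_ erefl p hp).
Qed.
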